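(* Let $\mathbb{K}$ be a field of characteristic zero. Let $f_1,\dots,f_m\in\mathbb{K}[X]$ be nonzero polynomials with $\deg f_i=d_i$, let $(\alpha_{i,j})\in\mathbb{Z}_{\ge0}^{m\times\ell}$, let $a_1,\dots,a_\ell\in\mathbb{K}$, and let \[P=\sum_{j=1}^\ell a_j\prod_{i=1}^m f_i^{\alpha_{i,j}}\in\mathbb{K}[X].\] Let $F\in\mathbb{K}[X]$ be irreducible and let $\mu_i=\operatorname{mult}_F(f_i)$. If $P\neq0$, then \[\operatorname{mult}_F(P)\le\max_{1\le j\le\ell}\ \sum_{i=1}^m\left(\mu_i\alpha_{i,j}+(d_i-\mu_i)\binom{\ell+1-j}{2}\right).\]
   Context: For polynomials $F$ and $P\neq0$, $\operatorname{mult}_F(P)$ denotes the multiplicity of $F$ as a factor of $P$, i.e. the largest integer $\mu$ such that $F^\mu$ divides $P$. *)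

(* Defs.v *)
From HB Require Import structures.
From mathcomp Require Import all_boot all_order all_algebra.
Set Implicit Arguments. Unset Strict Implicit. Unset Printing Implicit Defensive.
Import Order.TTheory GRing.Theory Num.Theory.
Local Open Scope ring_scope.

(* mult F P : the multiplicity of F as a factor of P, i.e. the largest mu
   such that F^mu divides P.  For P != 0 and F non-constant any such mu is
   < size P, so the maximum over mu < (size P).+1 is the largest one. *)
Definition mult (K : fieldType) (F P : {poly K}) : nat :=
  \max_(mu < (size P).+1 | F ^+ mu %| P) mu.

(* Main.v *)
Require Import Defs.
From HB Require Import structures.
From mathcomp Require Import all_boot all_order all_algebra.
From mathcomp Require Import ring zify.
Import GRing.Theory.
Local Open Scope ring_scope.

Section Aux.
Variable K : fieldType.
Hypothesis Hc : [pchar K] =i pred0.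

Lemma natK_neq0 n : (0 < n)%N -> n%:R != 0 :> K.
Proof. by move/pcharf0P: Hc => H; rewrite H -lt0n. Qed.

Lemma natK_inj m n : m%:R = n%:R :> K -> m = n.
Proof.
wlog le : m n / (m <= n)%N.
  move=> W E; case: (leqP m n) => [/W/(_ E)//|/ltnW/W]; by move=> /(_ (esym E)).
move=> E; apply/eqP; rewrite eqn_leq le /=.
have: (n - m)%:R == 0 :> K by rewrite natrB // E subrr.
by move/pcharf0P: Hc => ->; rewrite subn_eq0.
Qed.

Lemma size_derivK (p : {poly K}) : size p^`() = (size p).-1.
Proof.
have [lep1|lt1p] := leqP (size p) 1.
  by rewrite {1}[p]size1_polyC // derivC size_poly0; case: (size p) lep1 => [|[]].
rewrite /deriv size_poly_eq // -mulr_natr mulf_eq0 negb_or natK_neq0 ?andbT.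
  by rewrite -subn2 -subSn // subn2 -lead_coefE lead_coef_eq0 -size_poly_eq0 -(subnKC lt1p).
by rewrite -subn2 -subSn // subn2 -(subnKC lt1p).
Qed.

Lemma deriv_eq0K (p : {poly K}) : p^`() = 0 -> p = (p`_0)%:P.
Proof.
move=> H; apply: size1_polyC; move: (size_derivK p); rewrite H size_poly0.
by case: (size p) => [|[]].
Qed.

Lemma lead_coef_derivK (p : {poly K}) : lead_coef p^`() = lead_coef p *+ (size p).-1.
Proof.
have [lep1|lt1p] := leqP (size p) 1.
  rewrite [p]size1_polyC // derivC lead_coef0 size_polyC.
  by case: (_ != 0); rewrite /= mulr0n.
rewrite !lead_coefE size_derivK coef_deriv.
by rewrite -subn2 -subSn // subn2 -(subnKC lt1p).
Qed.

Lemma rc_size (p q : {poly K}) : p != 0 -> q != 0 ->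
  p * q^`() = p^`() * q -> size p = size q.
Proof.
move=> p0 q0 E.
have [dq0|dq0] := eqVneq q^`() 0.
  have dp0 : p^`() = 0.
    by apply/eqP; move: E; rewrite dq0 mulr0 => /esym/eqP; rewrite mulf_eq0 (negPf q0) orbF.
  move: (size_derivK p) (size_derivK q); rewrite dp0 dq0 size_poly0.
  move: p0 q0; rewrite -!size_poly_eq0.
  by case: (size p) => [|[]] //; case: (size q) => [|[]].
have dp0 : p^`() != 0.
  apply: contraNneq dq0 => dp0; move: E; rewrite dp0 mul0r => /eqP.
  by rewrite mulf_eq0 (negPf p0).
move: (congr1 lead_coef E); rewrite !lead_coefM !lead_coef_derivK.
rewrite mulrnAr mulrnAl => /eqP.
rewrite -[X in X == _]mulr_natr -[X in _ == X]mulr_natr.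
rewrite (inj_eq (mulfI _)); last by rewrite mulf_neq0 // lead_coef_eq0.
move/eqP/natK_inj => H.
rewrite (polySpred p0) (polySpred q0) H.
done.
Qed.

Lemma ratconst (p q : {poly K}) : p != 0 ->
  p * q^`() = p^`() * q -> exists c, q = c *: p.
Proof.
move=> p0; elim: {q}(size q).+1 {-2}q (ltnSn (size q)) => // n IH q Hs E.
have [->|q0] := eqVneq q 0; first by exists 0; rewrite scale0r.
have Hsz := rc_size _ _ p0 q0 E.
pose c := lead_coef q / lead_coef p.
pose r := q - c *: p.
have Er : p * r^`() = p^`() * r.
  by rewrite /r derivB derivZ !mulrBr E -!scalerAr [p * _]mulrC.
have Hr : (size r < size q)%N.
  rewrite (polySpred q0) ltnS; apply/leq_sizeP => j Hj.
  rewrite /r coefB coefZ.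
  move: Hj; rewrite leq_eqVlt => /orP[/eqP <-|Hj].
    by rewrite -lead_coefE -Hsz -lead_coefE /c mulfVK ?subrr // lead_coef_eq0.
  have Hq : (size q <= j)%N by rewrite (polySpred q0).
  have Hp : (size p <= j)%N by rewrite Hsz.
  by rewrite (nth_default 0 Hq) (nth_default 0 Hp) mulr0 subrr.
have [c' Ec'] := IH r (leq_trans Hr Hs) Er.
exists (c' + c); rewrite scalerDl -Ec' /r subrK //.
Qed.

End Aux.

Section Theta.
Variable K : fieldType.
Hypothesis Hc : [pchar K] =i pred0.
Variable h : {poly K}.
Hypothesis h0 : h != 0.

Definition th (q : {poly K}) := h * q^`().

Lemma th0 : th 0 = 0. Proof. by rewrite /th deriv0 mulr0. Qed.
Lemma thD p q : th (p + q) = th p + th q. Proof. by rewrite /th derivD mulrDr. Qed.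
Lemma thZ c p : th (c *: p) = c *: th p. Proof. by rewrite /th derivZ scalerAr. Qed.
Lemma thM p q : th (p * q) = th p * q + p * th q.
Proof. by rewrite /th derivM mulrDr mulrA [h * (p * _)]mulrCA. Qed.

Lemma iter_th0 k : iter k th 0 = 0.
Proof. by elim: k => //= k ->; rewrite th0. Qed.
Lemma iter_thD k p q : iter k th (p + q) = iter k th p + iter k th q.
Proof. by elim: k => //= k ->; rewrite thD. Qed.
Lemma iter_thZ k c p : iter k th (c *: p) = c *: iter k th p.
Proof. by elim: k => //= k ->; rewrite thZ. Qed.
Lemma iter_th_sum k n (F : 'I_n -> {poly K}) :
  iter k th (\sum_(j < n) F j) = \sum_(j < n) iter k th (F j).
Proof. exact: (big_morph _ (iter_thD k) (iter_th0 k)). Qed.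
Lemma th_sum n (F : 'I_n -> {poly K}) : th (\sum_(j < n) F j) = \sum_(j < n) th (F j).
Proof. exact: (big_morph _ thD th0). Qed.

Definition Wm n (g : 'I_n -> {poly K}) : 'M[{poly K}]_n :=
  \matrix_(k, j) iter k th (g j).
Arguments Wm {n} g.

Lemma WL n (g : 'I_n -> {poly K}) : \det (Wm g) = 0 ->
  exists c : 'I_n -> K, (exists j, c j != 0) /\ \sum_j c j *: g j = 0.
Proof.
elim: n g => [|n IH] g.
  by rewrite det_mx00 => /eqP; rewrite oner_eq0.
move=> Hdet.
pose g' := fun j : 'I_n => g (lift ord_max j).
have [D0|D0] := eqVneq (\det (Wm g')) 0.
  have [c' [[j0 Hj0] Hs]] := IH g' D0.
  exists (fun j => if unlift ord_max j is Some j' then c' j' else 0); split.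
    by exists (lift ord_max j0); rewrite liftK.
  rewrite (bigD1_ord ord_max) //= unlift_none scale0r add0r.
  by rewrite -[RHS]Hs; apply: eq_bigr => j _; rewrite liftK.
pose M := Wm g.
pose w j := \adj M j ord_max.
have R0 : forall k : 'I_n.+1, \sum_j iter k th (g j) * w j = 0.
  move=> k; have := congr1 (fun A : 'M[{poly K}]_n.+1 => A k ord_max) (mul_mx_adj M).
  by rewrite Hdet !mxE /= mul0rn => E; rewrite -[RHS]E; apply: eq_bigr => j _; rewrite mxE.
have Wmax : w ord_max = (-1) ^+ (n + n) * \det (Wm g').
  rewrite /w /M mxE /cofactor; congr (_ * \det _).
  by apply/matrixP => k j; rewrite !mxE lift_max.
have w0 : w ord_max != 0.
  by rewrite Wmax mulf_eq0 negb_or signr_eq0.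
have R1 : forall k : 'I_n, \sum_j iter k th (g j) * th (w j) = 0.
  move=> k; have := congr1 th (R0 (lift ord_max k)).
  rewrite th_sum th0 (eq_bigr (fun j => iter k.+1 th (g j) * w j + iter k th (g j) * th (w j))).
    rewrite big_split /=.
    have -> : \sum_j iter k.+1 th (g j) * w j = 0.
      have Hk : (k.+1 < n.+1)%N by rewrite ltnS.
      by rewrite -[RHS](R0 (Ordinal Hk)).
    by rewrite add0r.
  by move=> j _; rewrite thM lift_max.
pose z j := w ord_max * th (w j) - th (w ord_max) * w j.
have Rz : forall k : 'I_n, \sum_(j : 'I_n) iter k th (g' j) * z (lift ord_max j) = 0.
  move=> k.
  have : \sum_j iter k th (g j) * z j = 0.
    rewrite (eq_bigr (fun j => w ord_max * (iter k th (g j) * th (w j)) -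
                               th (w ord_max) * (iter k th (g j) * w j))).
      rewrite sumrB -!mulr_sumr R1.
      have Hk : (k < n.+1)%N by rewrite ltnS ltnW.
      by have := R0 (Ordinal Hk); rewrite /= => ->; rewrite !mulr0 subrr.
    by move=> j _; rewrite /z mulrBr; congr (_ - _); rewrite mulrCA.
  rewrite (bigD1_ord ord_max) //=.
  have -> : z ord_max = 0 by rewrite /z mulrC subrr.
  by rewrite mulr0 add0r.
have z0 : forall j : 'I_n, z (lift ord_max j) = 0.
  pose Z := \col_(j < n) z (lift ord_max j).
  have HZ : Wm g' *m Z = 0.
    apply/matrixP => k j0; rewrite !mxE -[RHS](Rz k).
    by apply: eq_bigr => j _; rewrite !mxE.
  have := congr1 (mulmx (\adj (Wm g'))) HZ.
  rewrite mulmxA mul_adj_mx mul_scalar_mx mulmx0 => /eqP.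
  rewrite scalemx_eq0 (negPf D0) /= => /eqP HZ0 j.
  by have := congr1 (fun A : 'cV[{poly K}]_n => A j 0) HZ0; rewrite !mxE.
have zall : forall j, z j = 0.
  move=> j; case: (unliftP ord_max j) => [j'|] ->; first exact: z0.
  by rewrite /z mulrC subrr.
have cst : forall j, exists c, w j == c *: w ord_max.
  move=> j; have [//|c Hc'] := @ratconst _ Hc (w ord_max) (w j) w0; first last.
    by exists c; apply/eqP.
  have := zall j; rewrite /z /th => /eqP; rewrite subr_eq0 => /eqP E.
  apply: (mulfI h0); by rewrite mulrCA E -mulrA mulrCA.
pose c j := xchoose (cst j).
have Ec : forall j, w j = c j *: w ord_max := fun j => eqP (xchooseP (cst j)).
exists c; split.
  exists ord_max; apply/eqP => c0; move: (Ec ord_max); rewrite c0 scale0r.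
  by move/eqP; rewrite (negPf w0).
have := R0 ord0; rewrite /= (eq_bigr (fun j => (c j *: g j) * w ord_max)).
  by rewrite -mulr_suml => /eqP; rewrite mulf_eq0 (negPf w0) orbF => /eqP.
by move=> j _; rewrite Ec -scalerAr scalerAl.
Qed.

End Theta.
Arguments th {K} h q.
Arguments Wm {K} h {n} g.

Section Mult.
Variable K : fieldType.

Lemma mult_dvd (F P : {poly K}) : F ^+ (mult F P) %| P.
Proof.
rewrite /mult.
have H : (0 < #|[pred mu : 'I_(size P).+1 | (F ^+ mu %| P)%R]|)%N.
  by apply/card_gt0P; exists ord0; rewrite inE expr0 dvd1p.
have [i0 Hi0 E] := eq_bigmax_cond (fun mu : 'I_(size P).+1 => nat_of_ord mu) H.
by rewrite E; rewrite inE in Hi0.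
Qed.

Lemma size_exp_ge (F : {poly K}) k : (1 < size F)%N -> (k <= (size (F ^+ k)).-1)%N.
Proof. by move=> H; rewrite size_exp; apply: leq_pmull; rewrite -subn1 subn_gt0. Qed.

Lemma mult_ge (F P : {poly K}) k : P != 0 -> (1 < size F)%N -> F ^+ k %| P ->
  (k <= mult F P)%N.
Proof.
move=> P0 F1 Hd.
have Hk : (k < (size P).+1)%N.
  rewrite ltnS; exact: leq_trans (leq_trans (size_exp_ge F k F1) (leq_pred _)) (dvdp_leq P0 Hd).
exact: (@leq_bigmax_cond _ _ (fun mu : 'I_(size P).+1 => nat_of_ord mu) (Ordinal Hk)).
Qed.

Lemma mult_size (F P : {poly K}) : P != 0 -> 
  ((size F).-1 * mult F P <= (size P).-1)%N.
Proof.
by move=> P0; rewrite -size_exp -!subn1 leq_sub2r // dvdp_leq // mult_dvd.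
Qed.

Lemma irr_coprime (F u : {poly K}) : irreducible_poly F -> ~~ (F %| u) -> coprimep F u.
Proof.
move=> Fi Fu; rewrite /coprimep; apply/negPn/negP => Hs.
have := Fi.2 _ Hs (dvdp_gcdl F u) => /eqp_dvdl Hg.
by move: Fu; rewrite -Hg dvdp_gcdr.
Qed.

End Mult.

Section Eig.
Variable K : fieldType.
Variable h : {poly K}.

Lemma eigM p q a b : th h p = a * p -> th h q = b * q -> th h (p * q) = (a + b) * (p * q).
Proof. by move=> Ep Eq; rewrite thM Ep Eq; ring. Qed.

Lemma eigX p a n : th h p = a * p -> th h (p ^+ n) = (a *+ n) * (p ^+ n).
Proof.
move=> Ep; elim: n => [|n IH]; first by rewrite expr0 mulr0n mul0r /th derivC mulr0.
by rewrite exprS (eigM _ _ _ _ Ep IH) mulrS.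
Qed.

Lemma eigZ c p a : th h p = a * p -> th h (c *: p) = a * (c *: p).
Proof. by move=> Ep; rewrite thZ Ep scalerAr. Qed.

Lemma eigP (I : finType) (G : I -> {poly K}) (a : I -> {poly K}) :
  (forall i, th h (G i) = a i * G i) ->
  th h (\prod_i G i) = (\sum_i a i) * \prod_i G i.
Proof.
move=> E; elim/big_rec2: _ => [|i x p _ IH]; first by rewrite mul0r /th derivC mulr0.
exact: eigM.
Qed.

Fixpoint pk (l : {poly K}) k := if k is k'.+1 then th h (pk l k') + l * pk l k' else 1.

Lemma iter_eig q l k : th h q = l * q -> iter k (th h) q = pk l k * q.
Proof.
move=> E; elim: k => [|k IH] /=; first by rewrite mul1r.
by rewrite IH thM E; ring.
Qed.

Definition Sz (p : {poly K}) n := (size p <= n.+1)%N.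

Lemma Sz_le p n n' : (n <= n')%N -> Sz p n -> Sz p n'.
Proof. by move=> H1 H2; apply: leq_trans H2 _; rewrite ltnS. Qed.

Lemma Sz0 n : Sz 0 n. Proof. by rewrite /Sz size_poly0. Qed.

Lemma Sz_add p q n : Sz p n -> Sz q n -> Sz (p + q) n.
Proof. by rewrite /Sz => H1 H2; apply: leq_trans (size_polyD _ _) _; rewrite geq_max H1 H2. Qed.

Lemma Sz_mul p q a b : Sz p a -> Sz q b -> Sz (p * q) (a + b).
Proof.
rewrite /Sz => H1 H2; apply: leq_trans (size_polyMleq _ _) _.
have := leq_add H1 H2; rewrite addSn addnS /=; case: (size p + size q)%N => //.
Qed.

Lemma Sz_muln p n k : Sz p n -> Sz (p *+ k) n.
Proof. by move=> H; elim: k => [|k IH]; rewrite ?mulr0n ?Sz0 // mulrS Sz_add. Qed.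

Lemma Sz_sum (I : finType) (G : I -> {poly K}) n :
  (forall i, Sz (G i) n) -> Sz (\sum_i G i) n.
Proof. by move=> H; apply: (big_ind (fun p => Sz p n)) => //; [apply: Sz0 | move=> x y; apply: Sz_add]. Qed.

Lemma Sz_1 : Sz 1 0. Proof. by rewrite /Sz size_poly1. Qed.

Lemma Sz_prod (I : finType) (G : I -> {poly K}) b :
  (forall i, Sz (G i) (b i)) -> Sz (\prod_i G i) (\sum_i b i).
Proof.
move=> H; elim/big_rec2: _ => [|i x p _ IH]; first exact: Sz_1.
exact: Sz_mul.
Qed.

Lemma Sz_th q n B : ((size h).-2 <= B)%N -> Sz q n -> Sz (th h q) (n + B).
Proof.
rewrite /Sz /th => HB Hq; apply: leq_trans (size_polyMleq _ _) _.
have Hd : (size q^`() <= (size q).-1)%N by rewrite /deriv size_poly.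
move: HB Hq Hd; case: (size h) => [|[|s]] /=; case: (size q^`()) => [|t]; case: (size q) => [|r]; lia.
Qed.

Lemma Sz_det n (A : 'M[{poly K}]_n) B : (forall i j, Sz (A i j) (i * B)) ->
  Sz (\det A) ('C(n, 2) * B).
Proof.
move=> H; rewrite /determinant; apply: Sz_sum => s.
rewrite /Sz size_Msign.
have -> : ('C(n, 2) * B = \sum_(i < n) (i * B))%N.
  by rewrite -big_distrl /= -bin2_sum big_mkord.
exact: Sz_prod.
Qed.

End Eig.
Arguments Sz {K} p n.
Arguments pk {K} h l k.

Section Main.
Variable K : fieldType.
Hypothesis Hc : [pchar K] =i pred0.
Variables (m : nat) (f : 'I_m -> {poly K}) (F : {poly K}).
Hypothesis fnz : forall i, f i != 0.
Hypothesis Firr : irreducible_poly F.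

Lemma F1 : (1 < size F)%N. Proof. exact: Firr.1. Qed.
Lemma Fnz : F != 0. Proof. exact: irredp_neq0. Qed.

Definition mu i := mult F (f i).
Definition u i := f i %/ F ^+ mu i.

Lemma f_dec i : f i = u i * F ^+ mu i.
Proof. by rewrite divpK // mult_dvd. Qed.

Lemma u_nz i : u i != 0.
Proof. by apply: contra_neq (fnz i); rewrite f_dec => ->; rewrite mul0r. Qed.

Lemma u_cop i : coprimep F (u i).
Proof.
apply: irr_coprime => //; apply/negP => Hd.
have : ((mu i).+1 <= mu i)%N.
  apply: mult_ge (fnz i) F1 _.
  by rewrite {1}f_dec exprSr [u i * _]mulrC dvdp_mul2l ?expf_neq0 ?Fnz.
by rewrite ltnn.
Qed.

Definition U := \prod_i u i.
Definition hh := F * U.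
Definition V i := \prod_(k | k != i) u k.
Lemma U_dec i : U = u i * V i.
Proof. by rewrite /U (bigD1 i). Qed.

Definition rho i := (U * F^`()) *+ mu i + F * ((u i)^`() * V i).

Lemma th_f i : th hh (f i) = rho i * f i.
Proof.
rewrite /th /rho /hh f_dec derivM deriv_exp (U_dec i).
case: (mu i) => [|n] /=.
  rewrite !mulr0n !expr0 add0r. ring.
rewrite -[F^`() * F ^+ n *+ n.+1]mulr_natr -[u i * V i * F^`() *+ n.+1]mulr_natr exprS.
set X := F ^+ n; set c : {poly K} := n.+1%:R. ring.
Qed.

Lemma size_prodE (I : finType) (G : I -> {poly K}) : (forall i, G i != 0) ->
  (size (\prod_i G i)).-1 = (\sum_i (size (G i)).-1)%N.
Proof.
move=> H.
suff : (\prod_i G i != 0) /\ (size (\prod_i G i)).-1 = (\sum_i (size (G i)).-1)%N by case.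
elim/big_rec2: _ => [|i x p _ [p0 IH]]; first by rewrite oner_neq0 size_poly1.
split; first by rewrite mulf_neq0.
rewrite size_mul // -IH; move: (H i) p0; rewrite -!size_poly_eq0.
case: (size (G i)) => // a; case: (size p) => // b; rewrite addSn /= addnS //.
Qed.

Lemma U_nz : U != 0.
Proof. by rewrite /U; apply/prodf_neq0 => i _; exact: u_nz. Qed.

Lemma degU : (size U).-1 = (\sum_i (size (u i)).-1)%N.
Proof. exact: size_prodE u_nz. Qed.

Lemma size_f i : (size (f i)).-1 = ((size (u i)).-1 + (size F).-1 * mu i)%N.
Proof.
have e1 := size_exp F (mu i).
have n1 : F ^+ mu i != 0 by rewrite expf_neq0 // Fnz.
rewrite f_dec size_mul ?u_nz // -e1.
move: (u_nz i) n1; rewrite -!size_poly_eq0.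
case: (size (u i)) => // a; case: (size (F ^+ mu i)) => // b.
by rewrite addSn addnS.
Qed.

Definition E := (size hh).-2.

Lemma size_hh : size hh = (size F + size U).-1.
Proof. by rewrite /hh size_mul ?Fnz ?U_nz. Qed.

Lemma size_derivle (p : {poly K}) : (size p^`() <= (size p).-1)%N.
Proof. by rewrite /deriv size_poly. Qed.

Lemma Sz_rho i : Sz (rho i) E.
Proof.
rewrite /rho /E size_hh; apply: Sz_add; first apply: Sz_muln.
  rewrite /Sz; apply: leq_trans (size_polyMleq _ _) _.
  have := size_derivle F; have := F1; move: U_nz; rewrite -size_poly_eq0.
  case: (size U) => // a; case: (size F) => [|[|b]] //; case: (size F^`()) => [|c]; lia.
rewrite /Sz; apply: leq_trans (size_polyMleq _ _) _.
have H2 : (size ((u i)^`() * V i)%R <= (size U).-1)%N.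
  apply: leq_trans (size_polyMleq _ _) _.
  have V0 : V i != 0 by apply: contra_neq U_nz; rewrite (U_dec i) => ->; rewrite mulr0.
  rewrite (U_dec i) size_mul ?u_nz //.
  have := size_derivle (u i); move: V0 (u_nz i); rewrite -!size_poly_eq0.
  case: (size (V i)) => // a; case: (size (u i)) => // b; case: (size (u i)^`()) => [|c]; lia.
have := F1; move: H2 U_nz; rewrite -size_poly_eq0.
case: (size U) => // a; case: (size F) => [|[|b]] //; case: (size ((u i)^`() * V i)) => [|c]; lia.
Qed.

Definition Dp := (\sum_i ((size (f i)).-1 - mu i))%N.

Lemma KI : (exists i, 1 < size (f i))%N -> (E <= (size F).-1 * Dp)%N.
Proof.
move=> [i0 Hi0].
rewrite /E size_hh.
have eD : Dp = (\sum_i (size (u i)).-1 + ((size F).-1 - 1) * \sum_i mu i)%N.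
  rewrite /Dp big_distrr -big_split /=; apply: eq_bigr => i _.
  rewrite size_f; have := F1; case: (size F) => [|[|b]] //= _; lia.
have hA : (1 <= \sum_i (size (u i)).-1 + (size F).-1 * \sum_i mu i)%N.
  rewrite big_distrr -big_split /= (bigD1 i0) //= -size_f.
  move: Hi0; case: (size (f i0)) => [|[|c]] //; lia.
move: eD hA; rewrite -degU => ->.
have := F1; move: U_nz; rewrite -size_poly_eq0.
move: (\sum_i mu i) => M.
case: (size U) => // a; case: (size F) => [|[|b]] // _ _ /=.
rewrite subn1 /= => hA.
have := leq_mul (leqnn b) hA.
nia.
Qed.

Definition lam (al : 'I_m -> nat) := \sum_i rho i *+ al i.
Definition gt (c : K) (al : 'I_m -> nat) := c *: \prod_i f i ^+ al i.

Lemma Sz_lam al : Sz (lam al) E.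
Proof. by apply: Sz_sum => i; apply: Sz_muln; apply: Sz_rho. Qed.

Lemma th_gt c al : th hh (gt c al) = lam al * gt c al.
Proof.
apply: eigZ; apply: eigP => i; apply: eigX; exact: th_f.
Qed.

Lemma Sz_pk al k : Sz (pk hh (lam al) k) (k * E).
Proof.
elim: k => [|k IH] /=; first exact: Sz_1.
apply: Sz_add.
  by rewrite mulSn addnC; apply: Sz_th.
by rewrite mulSn; apply: Sz_mul => //; apply: Sz_lam.
Qed.

Lemma th_dvd N q : F ^+ N %| q -> F ^+ N %| th hh q.
Proof.
case: N => [|n]; first by move=> _; rewrite expr0 dvd1p.
case/dvdpP => r ->.
have -> : th hh (r * F ^+ n.+1) = F ^+ n.+1 * (U * (F * r^`() + r * F^`() *+ n.+1)).
  rewrite /th /hh derivM deriv_exp -[F^`() * F ^+ n *+ n.+1]mulr_natr -[r * F^`() *+ n.+1]mulr_natr exprS.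
  set X := F ^+ n; set c : {poly K} := n.+1%:R. ring.
exact: dvdp_mulIl.
Qed.

Lemma iter_th_dvd N q k : F ^+ N %| q -> F ^+ N %| iter k (th hh) q.
Proof. by move=> H; elim: k => //= k IH; apply: th_dvd. Qed.

Lemma dvdp_sumI (I : finType) (G : I -> {poly K}) d :
  (forall i, d %| G i) -> d %| \sum_i G i.
Proof.
move=> H; apply: (big_ind (fun p => d %| p)); first by rewrite /dvdp mod0p.
  by move=> x y; apply: dvdp_add.
by move=> i _; apply: H.
Qed.

Lemma cop_prod (I : finType) (G : I -> {poly K}) p :
  (forall i, coprimep p (G i)) -> coprimep p (\prod_i G i).
Proof.
move=> H; apply: (big_ind (fun q => coprimep p q)) => //; first exact: coprimep1.
by move=> x y Hx Hy; rewrite coprimepMr Hx Hy.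
Qed.

Lemma prod_dec (al : 'I_m -> nat) :
  \prod_i f i ^+ al i = (\prod_i u i ^+ al i) * F ^+ (\sum_i mu i * al i)%N.
Proof.
rewrite -prodrXr -big_split /=; apply: eq_bigr => i _.
by rewrite f_dec exprMn -exprM.
Qed.

Lemma hh_nz : hh != 0. Proof. by rewrite /hh mulf_neq0 ?Fnz ?U_nz. Qed.

Lemma mainL (Hex : exists i, (1 < size (f i))%N) l :
  forall (alpha : 'I_m -> 'I_l -> nat) (a : 'I_l -> K),
  \sum_(j < l) a j *: \prod_(i < m) f i ^+ alpha i j != 0 ->
  (mult F (\sum_(j < l) a j *: \prod_(i < m) f i ^+ alpha i j) <=
   \max_(j < l) \sum_(i < m) (mult F (f i) * alpha i j
       + ((size (f i)).-1 - mult F (f i)) * 'C(l - j, 2)))%N.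
Proof.
elim: l => [|l IH] alpha a HP.
  by move: HP; rewrite !big_ord0 eqxx.
set P := \sum_(j < l.+1) _.
pose g j := gt (a j) (fun i => alpha i j).
have [W0|W0] := eqVneq (\det (Wm hh g)) 0.
  have [c [[k ck] Hc0]] := @WL K Hc hh hh_nz _ g W0.
  pose a' (j' : 'I_l) := (1 - c (lift k j') / c k) * a (lift k j').
  pose alpha' i (j' : 'I_l) := alpha i (lift k j').
  have EP : P = \sum_(j' < l) a' j' *: \prod_i f i ^+ alpha' i j'.
    have -> : P = P - (c k)^-1 *: \sum_j c j *: g j by rewrite Hc0 scaler0 subr0.
    rewrite /P scaler_sumr -sumrB (bigD1_ord k) //=.
    rewrite /g /gt !scalerA mulrA mulVf // mul1r subrr add0r.
    apply: eq_bigr => j' _; rewrite /a' /alpha' !scalerA -scalerBl; congr (_ *: _).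
    by rewrite mulrBl mul1r mulrA [_ * c _]mulrC.
  rewrite EP; apply: leq_trans (IH alpha' a' _) _; first by rewrite -EP.
  apply/bigmax_leqP => j' _; apply: leq_trans (leq_bigmax (lift k j')).
  apply: leq_sum => i _; rewrite /alpha' leq_add2l; apply: leq_mul => //; apply: leq_bin2l.
  rewrite /= /bump; case: (k <= j')%N => /=; lia.
pose Pm := \matrix_(k < l.+1, j < l.+1) pk hh (lam (fun i => alpha i j)) k.
have WPm : Wm hh g = Pm *m diag_mx (\row_j g j).
  apply/matrixP => k j; rewrite mul_mx_diag !mxE; apply: iter_eig; exact: th_gt.
have detP : \det (Wm hh g) = \det Pm * \prod_j g j.
  rewrite WPm det_mulmx det_diag; congr (_ * _); apply: eq_bigr => j _; rewrite mxE.
  done.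
have Pm0 : \det Pm != 0 by apply: contra_neq W0; rewrite detP => ->; rewrite mul0r.
have g00 : g ord0 != 0.
  apply: contra_neq W0; rewrite detP (bigD1 ord0) //= => ->; rewrite mul0r mulr0 //.
set N := mult F P.
have HT : forall k, F ^+ N %| iter k (th hh) P.
  by move=> k; apply: iter_th_dvd; apply: mult_dvd.
have Hcr : \det Pm * g ord0 = \sum_k \adj Pm ord0 k * iter k (th hh) P.
  have ET : \col_(k < l.+1) iter k (th hh) P = Pm *m \col_j g j.
    apply/matrixP => k z; rewrite !mxE /P iter_th_sum; apply: eq_bigr => j _.
    rewrite !mxE; apply: iter_eig; exact: th_gt.
  have := congr1 (fun A : 'cV[{poly K}]_l.+1 => (\adj Pm *m A) ord0 ord0) ET.
  rewrite /= mulmxA mul_adj_mx mul_scalar_mx !mxE => <-.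
  by apply: eq_bigr => k _; rewrite !mxE.
have D1 : F ^+ N %| \det Pm * g ord0.
  by rewrite Hcr; apply: dvdp_sumI => k; apply: dvdp_mull; exact: HT.
pose e := (\sum_i mu i * alpha i ord0)%N.
have a0 : a ord0 != 0.
  by apply: contra_neq g00; rewrite /g /gt => ->; rewrite scale0r.
have D2 : F ^+ N %| \det Pm * F ^+ e.
  move: D1; rewrite /g /gt prod_dec -scalerAr dvdpZr // mulrCA.
  rewrite Gauss_dvdpr //; apply: coprimep_expl; apply: cop_prod => i.
  by apply: coprimep_expr; apply: u_cop.
have Nle : (N <= e + 'C(l.+1, 2) * Dp)%N.
  case: (leqP N e) => [Ne|Ne]; first by apply: leq_trans Ne (leq_addr _ _).
  have D3 : F ^+ (N - e) %| \det Pm.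
    rewrite -(@dvdp_mul2r _ (F ^+ e)) ?expf_neq0 ?Fnz // -exprD subnK //.
    exact: ltnW.
  have s1 := dvdp_leq Pm0 D3.
  have s2 : Sz (\det Pm) ('C(l.+1, 2) * E).
    by apply: Sz_det => i j; rewrite mxE; apply: Sz_pk.
  have s3 := KI Hex.
  have h1 : ((size F).-1 * (N - e) <= 'C(l.+1, 2) * E)%N.
    rewrite -size_exp; apply: leq_trans (_ : (size (\det Pm)).-1 <= _)%N.
      by rewrite -!subn1 leq_sub2r.
    by move: s2; rewrite /Sz -subn1 leq_subLR add1n.
  have h2 : ((size F).-1 * (N - e) <= (size F).-1 * ('C(l.+1, 2) * Dp))%N.
    by apply: leq_trans h1 _; rewrite mulnCA leq_mul2l s3 orbT.
  rewrite leq_pmul2l in h2; last by have := F1; case: (size F) => [|[|]].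
  by rewrite -leq_subLR.
apply: leq_trans (leq_bigmax ord0); rewrite big_split /= -big_distrl /= subn0.
by rewrite mulnC.
Qed.

Lemma constL (Hnex : forall i, (size (f i) <= 1)%N) l
  (alpha : 'I_m -> 'I_l -> nat) (a : 'I_l -> K) :
  \sum_(j < l) a j *: \prod_(i < m) f i ^+ alpha i j != 0 ->
  mult F (\sum_(j < l) a j *: \prod_(i < m) f i ^+ alpha i j) = 0%N.
Proof.
move=> HP.
have SP : Sz (\sum_(j < l) a j *: \prod_(i < m) f i ^+ alpha i j) 0.
  apply: Sz_sum => j; rewrite /Sz; apply: leq_trans (size_scale_leq _ _) _.
  apply: (big_ind (fun p => Sz p 0)); first exact: Sz_1.
    by move=> x y Hx Hy; have := @Sz_mul K x y 0 0 Hx Hy; rewrite addn0.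
  move=> i _; elim: (alpha i j) => [|k IH]; first by rewrite expr0; apply: Sz_1.
  by rewrite exprS; have := @Sz_mul K _ _ 0 0 (Hnex i) IH; rewrite addn0.
have := @mult_size K F _ HP; move: SP; rewrite /Sz.
have := F1; case: (size F) => [|[|b]] // _.
case: (size _) => [|[|]] //= _.
all: by rewrite leqn0 muln_eq0 /= => /eqP.
Qed.

End Main.

Theorem theorem2p6 (K : fieldType) (Hchar : [pchar K] =i pred0)
  (m l : nat) (f : 'I_m -> {poly K}) (alpha : 'I_m -> 'I_l -> nat)
  (a : 'I_l -> K) (F : {poly K}) :
  (forall i, f i != 0) ->
  irreducible_poly F ->
  let P := \sum_(j < l) a j *: \prod_(i < m) f i ^+ alpha i j in
  P != 0 ->
  (mult F P <=
   \max_(j < l) \sum_(i < m)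
      (mult F (f i) * alpha i j
       + ((size (f i)).-1 - mult F (f i)) * 'C(l - j, 2)))%N.
Proof.
move=> fnz Firr P HP.
have [/existsP Hex|Hnex] := boolP [exists i, (1 < size (f i))%N].
  exact: (@mainL K Hchar m f F fnz Firr Hex l alpha a HP).
have Hc : forall i, (size (f i) <= 1)%N.
  move=> i; rewrite leqNgt; apply/negP => H; apply: (negP Hnex); apply/existsP; by exists i.
by rewrite /P (@constL K m f F Firr Hc l alpha a HP).
Qed.
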